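(* Let $G$ be a connected $d$-regular simple graph of order $n$, where $d\ge 3$. Then \[ \mathscr{K}_{nb}(G)=\frac{(d-2)\,\mathscr{K}_e(G)}{d}+2n+\frac{1}{d-2}-\frac{n}{d}. \]
   Context: Kemeny's constant of an irreducible finite Markov chain with transition matrix $P$ whose eigenvalues (with multiplicity) are $1=\rho_1,\rho_2,\dots,\rho_N$ (with $1$ simple) is $\mathscr{K}(P)=\sum_{i=2}^{N}\frac{1}{1-\rho_i}$; equivalently $\sum_{j\neq i}\pi_jm_{ij}$ with $\pi$ the stationary distribution and $m_{ij}$ mean first passage times. Arcs of $G$: for each edge $\{u,v\}$ the two ordered pairs $(u,v),(v,u)$. The edge Kemeny's constant $\mathscr{K}_e(G)$ is Kemeny's constant of the chain on arcs where from $(u,v)$ one moves to $(v,w)$ with probability $1/\deg(v)$ for each neighbor $w$ of $v$. The non-backtracking Kemeny's constant $\mathscr{K}_{nb}(G)$ is Kemeny's constant of the non-backtracking random walk on arcs, with transition matrix $P_{nb}$: from $(u,v)$ one moves to $(v,w)$ with probability $1/(\deg(v)-1)$ for each neighbor $w\ne u$ of $v$, all other transition probabilities being $0$. *)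

(* Defs.v *)
From HB Require Import structures.
From mathcomp Require Import all_boot all_order all_algebra.
From mathcomp Require Import algC.
Set Implicit Arguments. Unset Strict Implicit. Unset Printing Implicit Defensive.
Import Order.TTheory GRing.Theory Num.Theory.
Local Open Scope ring_scope.

(* Simple graph: symmetric irreflexive relation e on a finite vertex type V. *)

Definition arc (V : finType) (e : rel V) := {p : V * V | e p.1 p.2}.

Definition deg (V : finType) (e : rel V) (v : V) : nat := #|[pred w | e v w]|.


Definition Pe (V : finType) (e : rel V) : 'M[algC]_(#|{: arc e}|) :=
  \matrix_(i, j)
    let a := val (enum_val i) in let b := val (enum_val j) in
    if a.2 == b.1 then ((deg e a.2)%:R)^-1 else 0.

Definition Pnb (V : finType) (e : rel V) : 'M[algC]_(#|{: arc e}|) :=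
  \matrix_(i, j)
    let a := val (enum_val i) in let b := val (enum_val j) in
    if (a.2 == b.1) && (b.2 != a.1) then ((deg e a.2)%:R - 1)^-1 else 0.

Lemma char_poly_split (n : nat) (A : 'M[algC]_n) :
  exists rs : seq algC, char_poly A == \prod_(z <- rs) ('X - z%:P).
Proof.
have [rs Hrs] := closed_field_poly_normal (char_poly A).
by exists rs; rewrite {1}Hrs (monicP (char_poly_monic A)) scale1r.
Qed.

Definition eigenvalues (n : nat) (A : 'M[algC]_n) : seq algC :=
  xchoose (char_poly_split A).

(** Kemeny's constant: sum over eigenvalues rho_2..rho_N (all eigenvalues
    with one copy of the simple eigenvalue 1 removed) of 1/(1 - rho_i). *)
Definition kemeny (n : nat) (A : 'M[algC]_n) : algC :=
  \sum_(z <- rem 1 (eigenvalues A)) (1 - z)^-1.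

Definition Ke (V : finType) (e : rel V) : algC := kemeny (Pe e).
Definition Knb (V : finType) (e : rel V) : algC := kemeny (Pnb e).

(* Main.v *)
Require Import Defs.
From HB Require Import structures.
From mathcomp Require Import all_boot all_order all_algebra.
From mathcomp Require Import algC.
From mathcomp Require Import spectral sesquilinear.
From mathcomp Require Import ring lra zify.
Set Implicit Arguments. Unset Strict Implicit. Unset Printing Implicit Defensive.
Import Order.TTheory GRing.Theory Num.Theory.
Local Open Scope ring_scope.


Lemma perm_rem1 (T : eqType) (x : T) (s t : seq T) :
  perm_eq s t -> perm_eq (rem x s) (rem x t).
Proof.
move=> /permP H; apply/permP => P.
by rewrite !count_rem H; have := H (pred1 x); rewrite -!has_pred1 ?has_count => ->.
Qed.

Lemma kemeny_prod n (M : 'M[algC]_n) (s : seq algC) :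
  char_poly M = \prod_(z <- s) ('X - z%:P) ->
  kemeny M = \sum_(z <- rem 1 s) (1 - z)^-1.
Proof.
move=> Hs; rewrite /kemeny /eigenvalues.
set r := xchoose _; have /eqP := xchooseP (char_poly_split M); rewrite -/r Hs => /prod_XsubC_eq Hp.
by apply: perm_big; apply: perm_rem1; rewrite perm_sym.
Qed.

Lemma char_poly_horner n (A : 'M[algC]_n) t :
  (char_poly A).[t] = \det (t%:M - A).
Proof.
rewrite /char_poly -[_.[t]]/(horner_eval t _) -det_map_mx; congr (\det _).
apply/matrixP => i j; rewrite !mxE /horner_eval /=.
by case: (i == j); rewrite /= ?mulr1n ?mulr0n /horner_eval !hornerE.
Qed.

Lemma sylvester N n (X : 'M[algC]_(N, n)) (Z : 'M[algC]_(n, N)) :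
  \det (1%:M - X *m Z) = \det (1%:M - Z *m X).
Proof.
have E1 : block_mx 1%:M X Z 1%:M =
  block_mx 1%:M 0 Z 1%:M *m block_mx 1%:M X 0 (1%:M - Z *m X).
  by rewrite mulmx_block ?mul1mx ?mul0mx ?mulmx0 ?mulmx1 ?addr0 ?add0r addrC subrK.
have E2 : block_mx 1%:M X Z 1%:M =
  block_mx (1%:M - X *m Z) X 0 1%:M *m block_mx 1%:M 0 Z 1%:M.
  by rewrite mulmx_block ?mul1mx ?mul0mx ?mulmx0 ?mulmx1 ?addr0 ?add0r subrK.
have := congr1 determinant E1; rewrite E2 !det_mulmx det_lblock det_ublock.
by rewrite !det1 ?mul1r ?mulr1 det_ublock det1 mul1r.
Qed.
Lemma poly_eq_except (p q : {poly algC}) (S : seq algC) :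
  (forall t, t \notin S -> p.[t] = q.[t]) -> p = q.
Proof.
move=> H; apply/eqP; rewrite -subr_eq0; apply/negPn/negP => Hr.
set r := p - q in Hr.
set M := [seq k%:R : algC | k <- iota 0 (size r + size S)].
pose L := [seq t <- M | t \notin S].
have uM : uniq M.
  by rewrite map_inj_uniq ?iota_uniq // => x y /eqP; rewrite eqr_nat => /eqP.
have uL : uniq L by rewrite filter_uniq.
have rL : all (root r) L.
  apply/allP => t; rewrite mem_filter => /andP[tS _].
  by rewrite /root /r hornerD hornerN H // subrr.
have := max_poly_roots Hr rL uL.
have h1 : (size [seq t <- M | t \in S] <= size S)%N.
  by apply: uniq_leq_size; [rewrite filter_uniq | move=> x; rewrite mem_filter => /andP[]].
have h2 := count_predC (mem S) M.
rewrite size_map size_iota in h2.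
rewrite size_filter in h1.
rewrite /L size_filter.
have -> : count (fun t => t \notin S) M = count (predC (mem S)) M by [].
have h1' : (count (mem S) M <= size S)%N := h1. move: h1' h2; set c1 := count _ M; set c2 := count _ M. move=> h3 h4 h5; have := leq_add h3 h5; rewrite addnS h4 addnC; exact: (elimF idP (ltnn _)).
Qed.

Lemma normal_decomp k (A : 'M[algC]_k) : A \is normalmx ->
  exists P : 'M[algC]_k, exists l : 'rV[algC]_k,
    P \in unitmx /\ A = invmx P *m diag_mx l *m P.
Proof.
move=> /orthomx_spectralP HA.
by exists (spectralmx A), (spectral_diag A); split => //; apply: spectral_unit.
Qed.

Lemma det_decomp k (A P : 'M[algC]_k) (l : 'rV[algC]_k) a b :
  P \in unitmx -> A = invmx P *m diag_mx l *m P ->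
  \det (a%:M - b *: A) = \prod_i (a - b * l 0 i).
Proof.
move=> uP ->.
have -> : a%:M - b *: (invmx P *m diag_mx l *m P) =
   invmx P *m diag_mx (\row_i (a - b * l 0 i)) *m P.
  have -> : diag_mx (\row_i (a - b * l 0 i)) = a%:M - b *: diag_mx l.
    by apply/matrixP => i j; rewrite !mxE; case: (i == j); rewrite ?mulr1n ?mulr0n ?mulr0 ?subr0.
  by rewrite mulmxBr mulmxBl -scalemxAr -scalemxAl mul_mx_scalar -scalemxAl mulVmx // scalemx1.
rewrite !det_mulmx det_inv det_diag mulrC mulrA.
rewrite mulrV ?mul1r ?unitmxE //; by apply: eq_bigr => i _; rewrite mxE.
Qed.
Lemma char_Pe_pt N n (X : 'M[algC]_(N, n)) (Y : 'M[algC]_(n, N)) P l c t :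
  P \in unitmx -> Y *m X = invmx P *m diag_mx l *m P -> (n <= N)%N -> t != 0 ->
  (char_poly (c *: (X *m Y))).[t] = t ^+ (N - n) * \prod_i (t - c * l 0 i).
Proof.
move=> uP HYX hn t0; rewrite char_poly_horner.
have -> : t%:M - c *: (X *m Y) = t *: (1%:M - X *m ((c / t) *: Y)).
  by rewrite scalerBr scalemx1 -scalemxAr scalerA mulrCA divff // mulr1.
rewrite detZ sylvester -scalemxAl (det_decomp 1 (c / t) uP HYX).
have -> : \prod_i (t - c * l 0 i) = \prod_(i < n) (t * (1 - c / t * l 0 i)).
  apply: eq_bigr => i _; rewrite mulrBr mulr1 mulrA mulrCA divff // mulr1 //.
rewrite big_split /= prodr_const card_ord mulrA -exprD subnK //.
Qed.

Lemma char_Pnb_pt N n (X : 'M[algC]_(N, n)) (Y : 'M[algC]_(n, N)) (J : 'M[algC]_N)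
  P l dd s :
  P \in unitmx -> Y *m X = invmx P *m diag_mx l *m P ->
  J *m J = 1%:M -> Y *m (J *m X) = dd%:M -> s ^+ 2 != 1 ->
  \det (s%:M + J - X *m Y) =
  \det (s%:M + J) * (s ^+ 2 - 1) ^- n * \prod_i (s ^+ 2 - 1 + dd - s * l 0 i).
Proof.
move=> uP HYX JJ HYJX s2.
have s20 : s ^+ 2 - 1 != 0 by rewrite subr_eq0.
set M0 := s%:M + J.
set Mi := (s ^+ 2 - 1)^-1 *: (s%:M - J).
have HM : M0 *m Mi = 1%:M.
  rewrite /M0 /Mi -scalemxAr mulmxDl !mulmxBr JJ mul_mx_scalar mul_scalar_mx.
  rewrite mul_mx_scalar addrA subrK scale_scalar_mx -expr2 -[1%:M]/((1 : algC)%:M).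
  by rewrite -raddfB /= scale_scalar_mx mulVf.
have -> : M0 - X *m Y = M0 *m (1%:M - Mi *m X *m Y).
  by rewrite mulmxBr mulmx1 !mulmxA HM mul1mx.
rewrite det_mulmx -mulrA; congr (_ * _).
rewrite sylvester mulmxA.
have -> : 1%:M - Y *m Mi *m X = (s ^+ 2 - 1)^-1 *: ((s ^+ 2 - 1 + dd)%:M - s *: (Y *m X)).
  rewrite /Mi -scalemxAr -scalemxAl mulmxBr mulmxBl mul_mx_scalar -scalemxAl.
  rewrite -mulmxA HYJX.
  have E : (1%:M : 'M[algC]_n) = (s ^+ 2 - 1)^-1 *: (s ^+ 2 - 1)%:M by rewrite scale_scalar_mx mulVf.
  by rewrite [in LHS]E -scalerBr opprB addrA [in RHS](raddfD (@scalar_mx _ n)).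
rewrite detZ (det_decomp (s ^+ 2 - 1 + dd) s uP HYX) exprVn.
by []. Qed.


Lemma pm1_prod N (mu : 'rV[algC]_N) :
  (forall i, mu 0 i = 1 \/ mu 0 i = -1) -> \sum_i mu 0 i = 0 ->
  exists p, N = (p + p)%N /\ forall s, \prod_i (s + mu 0 i) = (s + 1) ^+ p * (s - 1) ^+ p.
Proof.
move=> H1 H0.
pose A := [pred i : 'I_N | mu 0 i == 1].
have Hm : forall i, i \notin A -> mu 0 i = -1.
  by move=> i; rewrite inE; case: (H1 i) => -> //; rewrite eqxx.
have Hc := cardC A; rewrite card_ord in Hc.
have HS : \sum_i mu 0 i = #|A|%:R - #|[predC A]|%:R.
  rewrite (bigID (mem A)) /= -!sumr_const; congr (_ + _).
    by apply: eq_bigr => i /eqP.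
  by rewrite -sumrN; apply: eq_bigr => i /Hm ->.
have HAA : #|A| = #|[predC A]|.
  apply/eqP; rewrite -(eqr_nat algC) -subr_eq0 -HS H0 //.
exists #|A|; split; first by rewrite -{1}Hc HAA.
move=> s; rewrite (bigID (mem A)) /=; congr (_ * _).
  by rewrite -prodr_const; apply: eq_bigr => i /eqP ->.
rewrite HAA -prodr_const; apply: eq_bigr => i /Hm ->. by [].
Qed.

Lemma J_diag N (J Q : 'M[algC]_N) mu :
  Q \in unitmx -> J = invmx Q *m diag_mx mu *m Q -> J *m J = 1%:M -> \tr J = 0 ->
  exists p, N = (p + p)%N /\ forall s, \det (s%:M + J) = (s + 1) ^+ p * (s - 1) ^+ p.
Proof.
move=> uQ HJ JJ tJ.
have HD : Q *m J *m invmx Q = diag_mx mu.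
  by rewrite HJ mulmxA mulmxK // mulKVmx.
have DD : diag_mx mu *m diag_mx mu = 1%:M.
  rewrite -HD -!mulmxA mulKmx // !mulmxA -(mulmxA Q) JJ mulmx1 mulmxV //.
have H1 : forall i, mu 0 i = 1 \/ mu 0 i = -1.
  move=> i; have /matrixP/(_ i i) := DD; rewrite mulmx_diag !mxE eqxx /= mulr1n.
  move=> /eqP; rewrite -expr2 sqrf_eq1 => /orP[] /eqP; by [left|right].
have H0 : \sum_i mu 0 i = 0.
  by rewrite -mxtrace_diag -HD mxtrace_mulC mulKmx.
have [p [Hp Hs]] := pm1_prod H1 H0.
exists p; split => // s.
have -> : s%:M + J = s%:M - (-1) *: J by rewrite scaleN1r opprK.
rewrite (det_decomp s (-1) uQ HJ) -Hs; apply: eq_bigr => i _.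
by rewrite mulN1r opprK.
Qed.


Lemma sum_arcs (V : finType) (e : rel V) (F : Defs.arc e -> algC) :
  \sum_(i < #|{: Defs.arc e}|) F (enum_val i) = \sum_(a : Defs.arc e) F a.
Proof. by rewrite -big_enum_val. Qed.

Lemma sum_verts (V : finType) (F : V -> algC) :
  \sum_(i < #|V|) F (enum_val i) = \sum_(v : V) F v.
Proof. by rewrite -big_enum_val. Qed.

Lemma Ssum (V : finType) (e : rel V) v w :
  \sum_(a : Defs.arc e) (((val a).1 == v) && ((val a).2 == w))%:R = (e v w)%:R :> algC.
Proof.
case: (boolP (e v w)) => H.
  pose a0 : Defs.arc e := exist _ (v, w) H.
  rewrite (bigD1 a0) //= !eqxx /= big1 ?addr0 // => a Ha.
  case: eqP => //= E1; case: eqP => //= E2; case/eqP: Ha; apply: val_inj => /=.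
  by case: (val a) E1 E2 => x y /= -> ->.
rewrite big1 // => a _; case: eqP => //= E1; case: eqP => //= E2.
by case/negP: H; case: a E1 E2 => [[x y] /= Hxy] <- <-.
Qed.

Lemma Ssum2 (V : finType) (e : rel V) v w :
  \sum_(a : Defs.arc e) (((val a).1 == v)%:R * ((val a).2 == w)%:R) = (e v w)%:R :> algC.
Proof.
rewrite -(Ssum e v w); apply: eq_bigr => a _.
by case: eqP; case: eqP; rewrite ?mulr1 ?mulr0 ?mul0r.
Qed.

Lemma sum_ind1 (T : finType) (x : T) : \sum_(v : T) ((x == v)%:R) = 1 :> algC.
Proof.
rewrite (bigD1 x) //= eqxx big1 ?addr0 // => v; rewrite eq_sym => /negbTE ->.
by [].
Qed.

Lemma sum_ind2 (T : finType) (x y : T) :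
  \sum_(v : T) ((x == v)%:R * (y == v)%:R) = (x == y)%:R :> algC.
Proof.
rewrite (bigD1 x) //= eqxx mul1r big1 ?addr0 ?(eq_sym y) // => v.
by rewrite eq_sym => /negbTE ->; rewrite mul0r.
Qed.

Lemma card_sum (T : finType) (P : pred T) : (#|P|)%:R = \sum_(v : T) (P v)%:R :> algC.
Proof.
rewrite -sum1_card natr_sum big_mkcond /=; apply: eq_bigr => v _.
by rewrite unfold_in; case: (P v).
Qed.

Lemma Dsum (V : finType) (e : rel V) v :
  \sum_(a : Defs.arc e) (((val a).1 == v)%:R) = (Defs.deg e v)%:R :> algC.
Proof.
transitivity (\sum_(a : Defs.arc e) \sum_w (((val a).1 == v)%:R * ((val a).2 == w)%:R) : algC).
  by apply: eq_bigr => a _; rewrite -mulr_sumr sum_ind1 mulr1.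
rewrite exchange_big /= /Defs.deg card_sum; apply: eq_bigr => w _.
by rewrite Ssum2.
Qed.


Notation av i := (val (enum_val i)).

Definition Xm (V : finType) (e : rel V) : 'M[algC]_(#|{: Defs.arc e}|, #|V|) :=
  \matrix_(i, j) ((av i).2 == enum_val j)%:R.
Definition Ym (V : finType) (e : rel V) : 'M[algC]_(#|V|, #|{: Defs.arc e}|) :=
  \matrix_(j, i) ((av i).1 == enum_val j)%:R.
Definition Jm (V : finType) (e : rel V) : 'M[algC]_(#|{: Defs.arc e}|) :=
  \matrix_(i, j) (av j == ((av i).2, (av i).1))%:R.
Definition Adj (V : finType) (e : rel V) : 'M[algC]_(#|V|) :=
  \matrix_(i, j) (e (enum_val i) (enum_val j))%:R.

Lemma XY_E (V : finType) (e : rel V) :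
  Xm e *m Ym e = \matrix_(i, j) ((av i).2 == (av j).1)%:R.
Proof.
apply/matrixP => i j; rewrite !mxE.
under eq_bigr do rewrite !mxE.
by rewrite (sum_verts (fun v => ((av i).2 == v)%:R * ((av j).1 == v)%:R)) sum_ind2.
Qed.

Lemma YX_E (V : finType) (e : rel V) : Ym e *m Xm e = Adj e.
Proof.
apply/matrixP => i j; rewrite !mxE.
under eq_bigr do rewrite !mxE.
by rewrite (sum_arcs (fun a => ((val a).1 == enum_val i)%:R * ((val a).2 == enum_val j)%:R)) Ssum2.
Qed.

Lemma JX_E (V : finType) (e : rel V) (e_sym : symmetric e) :
  Jm e *m Xm e = \matrix_(i, k) ((av i).1 == enum_val k)%:R.
Proof.
apply/matrixP => i k; rewrite !mxE.
under eq_bigr do rewrite !mxE.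
rewrite (sum_arcs (fun b => (val b == ((av i).2, (av i).1))%:R * ((val b).2 == enum_val k)%:R)).
set a := enum_val i.
have Hra : e (val a).2 (val a).1 by rewrite e_sym; exact: (valP a).
pose ra : Defs.arc e := exist _ ((val a).2, (val a).1) Hra.
rewrite (bigD1 ra) //= eqxx mul1r big1 ?addr0 // => b Hb.
case: eqP; rewrite ?mul0r // => E; case/eqP: Hb; exact: val_inj.
Qed.

Lemma YJX_E (V : finType) (e : rel V) (d : nat) (e_sym : symmetric e)
  (e_reg : forall v : V, deg e v = d) :
  Ym e *m (Jm e *m Xm e) = (d%:R)%:M.
Proof.
rewrite JX_E //; apply/matrixP => k1 k2; rewrite !mxE.
under eq_bigr do rewrite !mxE.
rewrite (sum_arcs (fun a => ((val a).1 == enum_val k1)%:R * ((val a).1 == enum_val k2)%:R)).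
case: (eqVneq k1 k2) => [<-|Hk].
  rewrite mulr1n -(e_reg (enum_val k1)) -Dsum; apply: eq_bigr => a _.
  by case: eqP; rewrite ?mulr1 ?mulr0.
rewrite mulr0n big1 // => a _.
have Hne : enum_val k1 != enum_val k2 by apply: contra Hk => /eqP/enum_val_inj ->.
case: eqP => [E1|]; last by rewrite mul0r.
case: eqP => [E2|]; last by rewrite mulr0.
by rewrite -E1 -E2 eqxx in Hne.
Qed.

Lemma JJ_E (V : finType) (e : rel V) (e_sym : symmetric e) :
  Jm e *m Jm e = 1%:M.
Proof.
apply/matrixP => i k; rewrite !mxE.
under eq_bigr do rewrite !mxE.
rewrite (sum_arcs (fun b => (val b == ((av i).2, (av i).1))%:R * (av k == ((val b).2, (val b).1))%:R)).
set a := enum_val i.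
have Hra : e (val a).2 (val a).1 by rewrite e_sym; exact: (valP a).
pose ra : Defs.arc e := exist _ ((val a).2, (val a).1) Hra.
rewrite (bigD1 ra) //= eqxx mul1r big1 ?addr0; last first.
  move=> b Hb; case: eqP; rewrite ?mul0r // => E; case/eqP: Hb; exact: val_inj.
have -> : (((val a).1, (val a).2)) = val a by case: (val a).
rewrite -/a; case: (eqVneq i k) => [<-|Hk]; first by rewrite eqxx.
case: eqP => // E.
have : enum_val k = a by apply: val_inj.
by move/enum_val_inj => E'; rewrite E' eqxx in Hk.
Qed.

Open Scope sesquilinear_scope.

Lemma Pe_E (V : finType) (e : rel V) (d : nat) (e_reg : forall v : V, deg e v = d) :
  Pe e = (d%:R)^-1 *: (Xm e *m Ym e).
Proof.
rewrite XY_E; apply/matrixP => i j; rewrite !mxE /= e_reg.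
by case: eqP; rewrite ?mulr1 ?mulr0.
Qed.

Lemma Pnb_E (V : finType) (e : rel V) (d : nat) (e_reg : forall v : V, deg e v = d) :
  Pnb e = (d%:R - 1)^-1 *: (Xm e *m Ym e - Jm e).
Proof.
rewrite XY_E; apply/matrixP => i j; rewrite !mxE /= e_reg.
case: (av i) => a1 a2; case: (av j) => b1 b2 /=.
rewrite xpair_eqE (eq_sym b1).
by case: (a2 == b1); case: (b2 == a1); rewrite /= ?subrr ?mulr0 ?subr0 ?mulr1.
Qed.

Lemma trJ (V : finType) (e : rel V) (e_irr : irreflexive e) : \tr (Jm e) = 0.
Proof.
rewrite /mxtrace big1 // => i _; rewrite mxE.
case: eqP => // E; have := valP (enum_val i).
move: E; case: (av i) => a1 a2 /= [-> _]; by rewrite e_irr.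
Qed.

Lemma Jm_normal (V : finType) (e : rel V) : Jm e \is normalmx.
Proof.
apply/normalmxP; suff -> : (Jm e) ^t*  = Jm e by [].
  apply/matrixP => i j; rewrite !mxE conjC_nat.
  case: (av i) => a1 a2; case: (av j) => b1 b2 /=; rewrite !xpair_eqE.
  by rewrite (eq_sym a1) (eq_sym a2) andbC.
Qed.

Lemma Adj_normal (V : finType) (e : rel V) (e_sym : symmetric e) : Adj e \is normalmx.
Proof.
apply/normalmxP; suff -> : (Adj e) ^t*  = Adj e by [].
  by apply/matrixP => i j; rewrite !mxE conjC_nat e_sym.
Qed.

Lemma card_arcs (V : finType) (e : rel V) (d : nat) (e_reg : forall v : V, deg e v = d) :
  #|{: Defs.arc e}| = (#|V| * d)%N.
Proof.
apply/eqP; rewrite -(eqr_nat algC); apply/eqP.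
have -> : (#|{: Defs.arc e}|%:R : algC) = \sum_(i < #|{: Defs.arc e}|) 1.
  by rewrite sumr_const card_ord.
transitivity (\sum_(a : Defs.arc e) \sum_(v : V) (((val a).1 == v)%:R) : algC).
  rewrite (sum_arcs (fun _ => 1)); apply: eq_bigr => a _; by rewrite sum_ind1.
rewrite exchange_big /=.
under eq_bigr do rewrite Dsum e_reg.
by rewrite sumr_const natrM mulr_natl.
Qed.

Close Scope sesquilinear_scope.


Lemma degsum (V : finType) (e : rel V) (d : nat) (e_reg : forall v : V, deg e v = d) x :
  \sum_(y : V) (e x y)%:R = d%:R :> algC.
Proof.
rewrite -(e_reg x) /Defs.deg -sum1_card natr_sum [RHS]big_mkcond /=.
by apply: eq_bigr => v _; rewrite inE; case: (e x v).
Qed.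

Lemma kernel_const (V : finType) (e : rel V) (d : nat)
  (e_sym : symmetric e) (e_conn : forall x y : V, connect e x y)
  (e_reg : forall v : V, deg e v = d) (v : 'rV[algC]_#|V|) :
  v *m Adj e = d%:R *: v -> forall i j, v 0 i = v 0 j.
Proof.
move=> Hv.
pose f (x : V) := v 0 (enum_rank x).
have HE : forall y, \sum_(x : V) f x * (e x y)%:R = d%:R * f y.
  move=> y; have /matrixP/(_ 0 (enum_rank y)) := Hv; rewrite !mxE.
  rewrite /f => <-; rewrite -(sum_verts (fun x => v 0 (enum_rank x) * (e x y)%:R)).
  by apply: eq_bigr => i _; rewrite !mxE enum_rankK enum_valK.
have E1 := degsum e_reg.
have E2 : forall y, \sum_(x : V) (e x y)%:R = d%:R :> algC.
  by move=> y; rewrite -(E1 y); apply: eq_bigr => x _; rewrite e_sym.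
have HE' : forall x, \sum_(y : V) f y * (e x y)%:R = d%:R * f x.
  by move=> x; rewrite -HE; apply: eq_bigr => y _; rewrite e_sym.
set S := d%:R * \sum_(x : V) f x * (f x)^*.
have P1 : \sum_(x : V) \sum_(y : V) (e x y)%:R * (f x * (f x)^*) = S.
  rewrite /S mulr_sumr; apply: eq_bigr => x _; by rewrite -mulr_suml E1.
have P4 : \sum_(x : V) \sum_(y : V) (e x y)%:R * (f y * (f y)^*) = S.
  rewrite exchange_big /S mulr_sumr; apply: eq_bigr => y _; by rewrite -mulr_suml E2.
have P2 : \sum_(x : V) \sum_(y : V) (e x y)%:R * (f x * (f y)^*) = S.
  rewrite exchange_big /S mulr_sumr; apply: eq_bigr => y _.
  rewrite (eq_bigr (fun x => (f x * (e x y)%:R) * (f y)^*)); last by move=> x _; ring.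
  by rewrite -mulr_suml HE mulrA.
have P3 : \sum_(x : V) \sum_(y : V) (e x y)%:R * (f y * (f x)^*) = S.
  rewrite /S mulr_sumr; apply: eq_bigr => x _.
  rewrite (eq_bigr (fun y => (f y * (e x y)%:R) * (f x)^*)); last by move=> y _; ring.
  by rewrite -mulr_suml HE' mulrA.
have Q0 : \sum_(x : V) \sum_(y : V) (e x y)%:R * ((f x - f y) * (f x - f y)^*) = 0.
  have -> : \sum_(x : V) \sum_(y : V) (e x y)%:R * ((f x - f y) * (f x - f y)^*) =
    \sum_(x : V) \sum_(y : V) (e x y)%:R * (f x * (f x)^*)
    - \sum_(x : V) \sum_(y : V) (e x y)%:R * (f x * (f y)^*)
    - \sum_(x : V) \sum_(y : V) (e x y)%:R * (f y * (f x)^*)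
    + \sum_(x : V) \sum_(y : V) (e x y)%:R * (f y * (f y)^*).
    rewrite -!sumrB -big_split /=; apply: eq_bigr => x _.
    rewrite -!sumrB -big_split /=; apply: eq_bigr => y _.
    rewrite rmorphB /=; ring.
  by rewrite P1 P2 P3 P4 subrr sub0r addrC subrr.
have Hpos : forall x y, 0 <= (e x y)%:R * ((f x - f y) * (f x - f y)^*).
  by move=> x y; rewrite mulr_ge0 ?ler0n ?mul_conjC_ge0.
have Hedge : forall x y, e x y -> f x = f y.
  move=> x y Hxy.
  have /psumr_eq0P H1 := Q0.
  have H2 : \sum_(y : V) (e x y)%:R * ((f x - f y) * (f x - f y)^*) = 0.
    by apply: H1 => // x' _; apply: sumr_ge0 => y' _; exact: Hpos.
  have /psumr_eq0P H3 := H2.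
  have := H3 (fun y' _ => Hpos x y') y isT; rewrite Hxy mul1r.
  by move/eqP; rewrite mul_conjC_eq0 subr_eq0 => /eqP.
have Hall : forall x y, f x = f y.
  move=> x y; have /connectP [p Hp ->] := e_conn x y.
  elim: p x Hp => [|z p IH] x //= /andP [Hxz Hp].
  by rewrite (Hedge _ _ Hxz) IH.
move=> i j.
by have := Hall (enum_val i) (enum_val j); rewrite /f !enum_valK.
Qed.


Lemma unit_row0 k (P : 'M[algC]_k) (z : 'rV[algC]_k) : P \in unitmx -> z *m P = 0 -> z = 0.
Proof. by move=> uP H; rewrite -(mulmxK uP z) H mul0mx. Qed.

Lemma simple_d (V : finType) (e : rel V) (d : nat)
  (e_sym : symmetric e) (e_conn : forall x y : V, connect e x y)
  (e_reg : forall v : V, deg e v = d) P l :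
  P \in unitmx -> Adj e = invmx P *m diag_mx l *m P ->
  forall i j, l 0 i = d%:R -> l 0 j = d%:R -> i = j.
Proof.
move=> uP HA i j Hi Hj.
have HPA : P *m Adj e = diag_mx l *m P by rewrite HA !mulmxA mulmxV // mul1mx.
have Hrow : forall k, l 0 k = d%:R -> forall a b, P k a = P k b.
  move=> k Hk a b.
  have Hr : row k P *m Adj e = d%:R *: row k P.
    rewrite -row_mul HPA mul_diag_mx; apply/rowP => m; rewrite !mxE Hk //.
  have := kernel_const e_sym e_conn e_reg Hr a b; by rewrite !mxE.
apply/eqP; apply/negPn/negP => Hij.
set al := P i i; set be := P j i.
set z : 'rV[algC]_#|V| := be *: delta_mx 0 i - al *: delta_mx 0 j.
have Hz : z *m P = 0.
  apply/rowP => m; rewrite mulmxBl -!scalemxAl -!rowE !mxE.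
  by rewrite (Hrow i Hi m i) (Hrow j Hj m i) -/al -/be mulrC subrr.
have Hz0 : forall m, z 0 m = 0 by move=> m; rewrite (unit_row0 uP Hz) mxE.
have Hbe : be = 0.
  by have := Hz0 i; rewrite !mxE !eqxx (negbTE Hij) /= mulr1 mulr0 subr0.
have Hal : al = 0.
  have := Hz0 j; rewrite !mxE !eqxx eq_sym (negbTE Hij) /= mulr1 mulr0 sub0r.
  by move/eqP; rewrite oppr_eq0 => /eqP.
have Hd : (delta_mx 0 i : 'rV[algC]_#|V|) *m P = 0.
  by apply/rowP => m; rewrite -rowE !mxE (Hrow i Hi m i) -/al Hal.
have := congr1 (fun M : 'rV[algC]_#|V| => M 0 i) (unit_row0 uP Hd).
rewrite /= !mxE !eqxx /=. by move/eqP; rewrite oner_eq0.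
Qed.

Lemma exists_d (V : finType) (e : rel V) (d : nat) (e_sym : symmetric e)
  (e_reg : forall v : V, deg e v = d) (V_nonempty : (0 < #|V|)%N) P l :
  P \in unitmx -> Adj e = invmx P *m diag_mx l *m P ->
  exists i, l 0 i = d%:R.
Proof.
move=> uP HA.
have H0 : \det (d%:R%:M - 1 *: Adj e) = 0.
  apply/eqP/det0P; exists (const_mx 1).
    apply/negP => /eqP/rowP/(_ (Ordinal V_nonempty)); rewrite !mxE => /eqP.
    by rewrite oner_eq0.
  apply/rowP => m; rewrite scale1r mulmxBr mul_mx_scalar !mxE.
  rewrite mulr1 -(degsum e_reg (enum_val m)).
  rewrite -(sum_verts (fun x => (e (enum_val m) x)%:R)).
  apply/eqP; rewrite subr_eq0; apply/eqP; apply: eq_bigr => k _; rewrite !mxE mul1r.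
  by rewrite e_sym.
rewrite (det_decomp _ _ uP HA) in H0.
move/eqP: H0; rewrite prodf_seq_eq0 => /hasP [i _]; rewrite mul1r subr_eq0 => /eqP ->.
by exists i.
Qed.


Lemma final_id (dR nR K : algC) : dR != 0 -> dR - 2 != 0 -> dR - 1 != 0 ->
  let q := dR - 1 in let pR := nR * dR / 2 in
  (1 - q^-1)^-1 + (pR - nR) * (1 - q^-1)^-1 + (pR - nR) * (1 + q^-1)^-1 + (nR - 1)
    + (dR - 2) / dR * K =
  (dR - 2) * (nR * dR - nR + K) / dR + 2 * nR + (dR - 2)^-1 - nR / dR.
Proof.
move=> h1 h2 h3 q pR; rewrite /q /pR.
have h4 : 1 - (dR - 1)^-1 = (dR - 2) / (dR - 1) by field.
have h5 : 1 + (dR - 1)^-1 = dR / (dR - 1) by field.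
rewrite h4 h5 !invfM !invrK.
by field; rewrite h1 h2.
Qed.

Lemma pair_id (dR z a b : algC) : dR != 0 -> dR - 1 != 0 -> z != dR ->
  a + b = z / (dR - 1) -> a * b = (dR - 1)^-1 ->
  (1 - a)^-1 + (1 - b)^-1 = 1 + (dR - 2) / dR * (1 - z / dR)^-1.
Proof.
move=> h1 h3 hz hs hp.
have hz' : dR - z != 0 by rewrite subr_eq0 eq_sym.
have hab : (1 - a) * (1 - b) = (dR - z) / (dR - 1).
  have -> : (1 - a) * (1 - b) = 1 - (a + b) + a * b by ring.
  by rewrite hs hp; field.
have hab0 : (1 - a) * (1 - b) != 0 by rewrite hab mulf_neq0 // invr_eq0.
have ha : 1 - a != 0 by apply: contraNneq hab0 => ->; rewrite mul0r.
have hb : 1 - b != 0 by apply: contraNneq hab0 => ->; rewrite mulr0.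
have -> : (1 - a)^-1 + (1 - b)^-1 = (2 - (a + b)) / ((1 - a) * (1 - b)) by field; rewrite ?ha ?hb.
rewrite hab hs.
have h4 : 1 - z / dR = (dR - z) / dR by field.
rewrite h4 invfM invrK.
by field; rewrite h1 h3 hz'.
Qed.

Definition nu1 (q z : algC) := (z / q + sqrtC ((z / q) ^+ 2 - 4 / q)) / 2.
Definition nu2 (q z : algC) := (z / q - sqrtC ((z / q) ^+ 2 - 4 / q)) / 2.

Lemma nu_sum q z : q != 0 -> nu1 q z + nu2 q z = z / q.
Proof. by move=> hq; rewrite /nu1 /nu2; field. Qed.

Lemma nu_prod q z : q != 0 -> nu1 q z * nu2 q z = q^-1.
Proof.
move=> hq; rewrite /nu1 /nu2.
have -> : (z / q + sqrtC ((z / q) ^+ 2 - 4 / q)) / 2 * ((z / q - sqrtC ((z / q) ^+ 2 - 4 / q)) / 2)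
  = ((z / q) ^+ 2 - sqrtC ((z / q) ^+ 2 - 4 / q) ^+ 2) / 4.
  by field.
by rewrite sqrtCK; field.
Qed.


Lemma prod_nseq (k : nat) (c : algC) (F : algC -> algC) :
  \prod_(z <- nseq k c) F z = F c ^+ k.
Proof. by elim: k => [|k IH]; rewrite ?big_nil ?expr0 // big_cons IH exprS. Qed.

Lemma sum_nseq (k : nat) (c : algC) (F : algC -> algC) :
  \sum_(z <- nseq k c) F z = k%:R * F c.
Proof.
elim: k => [|k IH]; first by rewrite big_nil mul0r.
by rewrite big_cons IH -addn1 natrD mulrDl mul1r addrC.
Qed.

Lemma prod_const_seq (T : Type) (s : seq T) (c : algC) : \prod_(z <- s) c = c ^+ size s.
Proof. by elim: s => [|x s IH]; rewrite ?big_nil ?expr0 // big_cons IH exprS. Qed.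

Lemma sum1_seq (T : Type) (s : seq T) : \sum_(z <- s) (1 : algC) = (size s)%:R.
Proof.
by elim: s => [|x s IH]; rewrite ?big_nil // big_cons IH /= -addn1 natrD addrC.
Qed.

Lemma horner_prodX (s : seq algC) t :
  (\prod_(z <- s) ('X - z%:P)).[t] = \prod_(z <- s) (t - z).
Proof. by rewrite horner_prod; apply: eq_bigr => z _; rewrite hornerXsubC. Qed.

Lemma split_prod n (l : 'rV[algC]_n) i0 (F : algC -> algC) :
  \prod_j F (l 0 j) = F (l 0 i0) * \prod_(z <- [seq l 0 j | j <- enum (predC1 i0)]) F z.
Proof.
by rewrite (bigD1 i0) //= big_map big_enum /=.
Qed.

Theorem theorem3p2 (V : finType) (e : rel V) (d : nat)
  (e_sym : symmetric e) (e_irr : irreflexive e)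
  (e_conn : forall x y : V, connect e x y)
  (e_reg : forall v : V, deg e v = d)
  (V_nonempty : (0 < #|V|)%N) (d_ge3 : (3 <= d)%N) :
  Knb e = (d%:R - 2) * Ke e / d%:R + 2 * (#|V|)%:R + (d%:R - 2)^-1
          - (#|V|)%:R / d%:R.
Proof.
have HN := card_arcs e_reg.
have hd : (d%:R : algC) != 0 by rewrite pnatr_eq0 -lt0n; lia.
have hd1 : (d%:R - 1 : algC) != 0.
  have -> : (d%:R - 1 : algC) = (d - 1)%:R by rewrite natrB //; lia.
  rewrite pnatr_eq0; lia.
have hd2 : (d%:R - 2 : algC) != 0.
  have -> : (d%:R - 2 : algC) = (d - 2)%:R by rewrite natrB //; lia.
  rewrite pnatr_eq0; lia.
have [P [l [uP HA]]] := normal_decomp (Adj_normal e_sym).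
have HYX : Ym e *m Xm e = invmx P *m diag_mx l *m P by rewrite YX_E.
have [i0 Hi0] := exists_d e_sym e_reg V_nonempty uP HA.
have Hsimp := simple_d e_sym e_conn e_reg uP HA.
have [Q [mu [uQ HJ]]] := normal_decomp (Jm_normal e).
have [p [Hp Hdet]] := J_diag uQ HJ (JJ_E e_sym) (trJ e_irr).
set rest := [seq l 0 j | j <- enum (predC1 i0)].
have Hrest : forall z, z \in rest -> z != d%:R.
  move=> z /mapP [j]; rewrite mem_enum inE => Hj ->.
  by apply: contra Hj => /eqP Hj'; rewrite (Hsimp _ _ Hj' Hi0).
have Hsize : size rest = #|V|.-1 by rewrite size_map -cardE cardC1 card_ord.
have HnN : (#|V| <= #|{: Defs.arc e}|)%N by rewrite HN; nia.
have HKe : Ke e = (#|{: Defs.arc e}| - #|V|)%:R + \sum_(z <- rest) (1 - z / d%:R)^-1.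
  rewrite /Ke (@kemeny_prod _ _ (1 :: nseq (#|{: Defs.arc e}| - #|V|) 0 ++ [seq z / d%:R | z <- rest])).
    by rewrite /= eqxx big_cat /= sum_nseq subr0 invr1 mulr1 big_map.
  apply: (@poly_eq_except _ _ [:: 0]) => t; rewrite inE => ht.
  rewrite (Pe_E e_reg) (char_Pe_pt _ uP HYX HnN ht) horner_prodX big_cons big_cat /=.
  rewrite prod_nseq subr0 big_map (split_prod l i0 (fun z => t - d%:R^-1 * z)) /= Hi0 mulVf // mulrCA; congr (_ * (_ * _)).
  by apply: eq_bigr => z _; rewrite mulrC.
set q : algC := d%:R - 1.
have hq : q != 0 by [].
have dq : (d%:R : algC) = q + 1 by rewrite /q subrK.
have Hpn : (#|V| <= p)%N by move: HN; rewrite Hp; nia.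
set k := (p - #|V|)%N.
have HKnb : Knb e = (1 - q^-1)^-1 + k%:R * (1 - q^-1)^-1 + k%:R * (1 + q^-1)^-1
    + \sum_(z <- rest) ((1 - nu1 q z)^-1 + (1 - nu2 q z)^-1).
  rewrite /Knb (@kemeny_prod _ _ (1 :: q^-1 :: nseq k q^-1 ++ nseq k (- q^-1)
      ++ [seq nu1 q z | z <- rest] ++ [seq nu2 q z | z <- rest])).
    rewrite /= eqxx big_cons !big_cat /= !sum_nseq !big_map -big_split /= opprK.
    by rewrite !addrA.
  apply: (@poly_eq_except _ _ [:: q^-1; - q^-1]) => t; rewrite !inE negb_or => /andP [ht1 ht2].
  set s := q * t.
  have Hs2 : s ^+ 2 != 1.
    rewrite sqrf_eq1 negb_or; apply/andP; split.
      by apply: contra ht1 => /eqP Hs; apply/eqP; rewrite -[t](mulKf hq) -/s Hs mulr1.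
    by apply: contra ht2 => /eqP Hs; apply/eqP; rewrite -[t](mulKf hq) -/s Hs mulrN1.
  rewrite (Pnb_E e_reg) char_poly_horner.
  have -> : t%:M - q^-1 *: (Xm e *m Ym e - Jm e) = q^-1 *: (s%:M + Jm e - Xm e *m Ym e).
    apply/matrixP => i j; rewrite !mxE.
    by case: (i == j); rewrite /= ?mulr1n ?mulr0n /s; field.
  rewrite detZ (char_Pnb_pt uP HYX (JJ_E e_sym) (YJX_E e_sym e_reg) Hs2) Hdet.
  rewrite horner_prodX !big_cons !big_cat /= !prod_nseq !big_map -big_split /=.
  have Hpair : forall z, (t - nu1 q z) * (t - nu2 q z) = q^-1 ^+ 2 * (s ^+ 2 - 1 + d%:R - s * z).
    move=> z; have -> : (t - nu1 q z) * (t - nu2 q z) = t ^+ 2 - (nu1 q z + nu2 q z) * t + nu1 q z * nu2 q z by ring.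
    by rewrite nu_sum // nu_prod // dq /s; field.
  rewrite [in RHS](eq_bigr (fun i => q^-1 ^+ 2 * (s ^+ 2 - 1 + d%:R - s * l 0 i))); last by move=> i _; rewrite Hpair.
  rewrite big_split /= prod_const_seq -cardE cardC1 card_ord.
  rewrite (split_prod l i0 (fun z => s ^+ 2 - 1 + d%:R - s * z)) /= Hi0 Hp big_map.
  set u := q^-1 ^+ 2; set X := s ^+ 2 - 1; set G0 := X + d%:R - s * d%:R.
  set Pi := \prod_(i <- enum (predC1 i0)) (X + d%:R - s * l 0 i).
  have H1 : (t - 1) * (t - q^-1) = u * G0 by rewrite /u /G0 /X /s dq; field.
  have H2 : (t - q^-1) ^+ k * (t - - q^-1) ^+ k = (u * X) ^+ k.
    by rewrite -exprMn /u /X /s; congr (_ ^+ _); field.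
  have H3 : (s + 1) ^+ p * (s - 1) ^+ p = X ^+ p by rewrite -exprMn /X; congr (_ ^+ _); ring.
  have Hu : q^-1 ^+ (p + p) = u ^+ p by rewrite /u -exprM mul2n addnn.
  have HX0 : X != 0 by rewrite /X subr_eq0.
  have HXp : X ^+ p / X ^+ #|V| = X ^+ k.
    by rewrite -(subnK Hpn) -/k exprD mulfK // expf_neq0.
  have Hun : u * u ^+ #|V|.-1 = u ^+ #|V| by rewrite -exprS prednK.
  rewrite Hu H3 HXp -(subnK Hpn) -/k exprD.
  transitivity (u * G0 * ((u * X) ^+ k) * (u ^+ #|V|.-1 * Pi)); last first.
    by rewrite -H1 -H2 !mulrA.
  rewrite [(u * X) ^+ k]exprMn -Hun; move: (u ^+ k) (X ^+ k) (u ^+ #|V|.-1) => a b c; ring.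
have Hpairs : \sum_(z <- rest) ((1 - nu1 q z)^-1 + (1 - nu2 q z)^-1) =
    (size rest)%:R + (d%:R - 2) / d%:R * \sum_(z <- rest) (1 - z / d%:R)^-1.
  rewrite (eq_big_seq (fun z => 1 + (d%:R - 2) / d%:R * (1 - z / d%:R)^-1)).
    by rewrite big_split /= sum1_seq mulr_sumr.
  move=> z /Hrest Hz; apply: pair_id => //; first exact: nu_sum.
  exact: nu_prod.

rewrite HKnb Hpairs HKe Hsize.
have Hk : (k%:R : algC) = #|V|%:R * d%:R / 2 - #|V|%:R.
  rewrite /k natrB //; congr (_ - _).
  have : (p + p)%:R = (#|V| * d)%:R :> algC by rewrite -Hp HN.
  by rewrite natrD natrM => <-; field.
rewrite Hk natrB // HN natrM.
have -> : (#|V|.-1)%:R = #|V|%:R - 1 :> algC.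
  by rewrite -subn1 natrB.
rewrite /q addrA. have := (final_id (#|V|%:R) (\sum_(z <- rest) (1 - z / d%:R)^-1) hd hd2 hd1). move=> H; exact H.
Qed.
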